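(* For every integer $n\geq 9$ with $n\equiv 2 \pmod 7$, there exists a simple plane graph $G$ on $n$ vertices containing neither $K_4$ nor $C_5$ as a subgraph such that $e(G)=\frac{15}{7}(n-2)$.
   Context: $K_4$ is the complete graph on $4$ vertices, $C_5$ the cycle on $5$ vertices; $e(G)$ is the number of edges of $G$. *)

(* Defs.v *)
From HB Require Import structures.
From mathcomp Require Import all_boot all_order all_algebra.
From mathcomp Require Import all_classical all_reals topology normedtype.
Set Implicit Arguments. Unset Strict Implicit. Unset Printing Implicit Defensive.
Import Order.TTheory GRing.Theory Num.Theory.
Import numFieldNormedType.Exports.

Definition simple_graph (n : nat) (e : rel 'I_n) : Prop :=
  (forall u, ~~ e u u) /\ (forall u v, e u v = e v u).

Definition nedges (n : nat) (e : rel 'I_n) : nat :=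
  #|[set p : 'I_n * 'I_n | (p.1 < p.2)%N && e p.1 p.2]|.

Definition has_K4 (n : nat) (e : rel 'I_n) : Prop :=
  exists f : 'I_4 -> 'I_n, injective f /\ (forall i j, i != j -> e (f i) (f j)).

Definition has_C5 (n : nat) (e : rel 'I_n) : Prop :=
  exists f : 'I_5 -> 'I_n, injective f /\
    (forall i : 'I_5, e (f i) (f (ordS i))).

Local Open Scope ring_scope.

Definition unit_interval (R : realType) (t : R) : Prop := 0 <= t <= 1.
Definition open_unit_interval (R : realType) (t : R) : Prop := 0 < t < 1.

Definition plane_embedding (R : realType) (n : nat) (e : rel 'I_n)
    (pos : 'I_n -> R * R) (arc : 'I_n -> 'I_n -> R -> R * R) : Prop :=
  injective pos /\
  (forall u v : 'I_n, (u < v)%N -> e u v ->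
     [/\ {within [set t | unit_interval t], continuous (arc u v)}%classic,
         (forall t s, unit_interval t -> unit_interval s ->
            arc u v t = arc u v s -> t = s),
         arc u v 0 = pos u,
         arc u v 1 = pos v &
         (forall t w, open_unit_interval t -> arc u v t <> pos w)]) /\
  (forall u v u' v' : 'I_n, (u < v)%N -> e u v -> (u' < v')%N -> e u' v' ->
     (u, v) <> (u', v') ->
     forall t s, open_unit_interval t -> open_unit_interval s ->
       arc u v t <> arc u' v' s).

Definition planar (R : realType) (n : nat) (e : rel 'I_n) : Prop :=
  exists pos arc, @plane_embedding R n e pos arc.

(* Main.v *)
Require Import Defs.
From HB Require Import structures.
From mathcomp Require Import all_boot all_order all_algebra.
From mathcomp Require Import all_classical all_reals topology normedtype.
From mathcomp Require Import ring lra zify.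
Set Implicit Arguments. Unset Strict Implicit. Unset Printing Implicit Defensive.

Definition Hl : seq (nat * nat) :=
  [:: (0,1); (0,2); (0,3); (0,7); (1,2); (1,4); (2,4); (3,6); (3,7); (4,5);
      (4,8); (5,6); (5,8); (6,7); (6,8)].
Definition H (i j : nat) : bool := ((i, j) \in Hl) || ((j, i) \in Hl).
Definition P (i j : nat) : bool := ~~ ((i, j) \in [:: (1,4); (2,4)]).

Lemma H_bound i j : H i j -> (i < 9) /\ (j < 9).
Proof.
have A : all (fun p : nat * nat => (p.1 < 9) && (p.2 < 9)) Hl by [].
rewrite /H => /orP[] /(allP A) /= /andP[]; auto.
Qed.

Lemma fin9 (Q : nat -> Prop) (c : pred nat) :
  all c (iota 0 9) -> (forall i, c i -> Q i) -> forall i, i < 9 -> Q i.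
Proof. move=> /allP A B i Hi; apply: B; apply: A; rewrite mem_iota; lia. Qed.

Definition I9 := iota 0 9.

Lemma H_sym i j : H i j = H j i.
Proof. by rewrite /H orbC. Qed.

Lemma H_irr i : H i i = false.
Proof.
apply/negP=> h; have [h1 _] := H_bound h; move: h.
have: all (fun i => ~~ H i i) I9 by [].
by move/allP/(_ i); rewrite mem_iota => /(_ ltac:(lia)) /negbTE ->.
Qed.

Lemma H_ab : H 0 8 = false. Proof. by []. Qed.

Lemma H_nocommon x : H 0 x -> H x 8 -> False.
Proof.
move=> h1 h2; have [_ hx] := H_bound h1; move: h1 h2.
have: all (fun x => ~~ (H 0 x && H x 8)) I9 by [].
by move/allP/(_ x); rewrite mem_iota => /(_ ltac:(lia)) /negP h a b; apply: h; rewrite a b.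
Qed.

Definition c5check : bool :=
  all (fun x0 => all (fun x1 => H x0 x1 ==> all (fun x2 => H x1 x2 ==> all (fun x3 =>
    H x2 x3 ==> all (fun x4 => (H x3 x4 && H x4 x0) ==> ~~ uniq [:: x0; x1; x2; x3; x4])
      I9) I9) I9) I9) I9.

Lemma c5check_ok : c5check. Proof. by vm_compute. Qed.

Lemma inI9 i : i < 9 -> i \in I9.
Proof. by rewrite mem_iota. Qed.

Lemma allI9 i (a : pred nat) : i < 9 -> all a I9 -> a i.
Proof. by move=> h /allP; apply; rewrite mem_iota. Qed.

Lemma H_noC5 x0 x1 x2 x3 x4 : uniq [:: x0; x1; x2; x3; x4] ->
  H x0 x1 -> H x1 x2 -> H x2 x3 -> H x3 x4 -> H x4 x0 -> False.
Proof.
move=> U h01 h12 h23 h34 h40.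
have [b0 b1] := H_bound h01; have [_ b2] := H_bound h12;
have [_ b3] := H_bound h23; have [_ b4] := H_bound h34.
move: c5check_ok; rewrite /c5check => /(allI9 b0) /(allI9 b1).
cbv beta; rewrite h01 ?implyTb => /(allI9 b2); cbv beta; rewrite h12 ?implyTb => /(allI9 b3).
cbv beta; rewrite h23 ?implyTb => /(allI9 b4); cbv beta; rewrite h34 h40 ?implyTb => /negP; apply.
exact: U.
Qed.

Definition k4check : bool :=
  all (fun x0 => all (fun x1 => H x0 x1 ==> all (fun x2 => (H x0 x2 && H x1 x2) ==> all (fun x3 =>
    (H x0 x3 && H x1 x3 && H x2 x3) ==> ~~ uniq [:: x0; x1; x2; x3]) I9) I9) I9) I9.

Lemma k4check_ok : k4check. Proof. by vm_compute. Qed.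

Lemma H_noK4 x0 x1 x2 x3 : uniq [:: x0; x1; x2; x3] ->
  H x0 x1 -> H x0 x2 -> H x1 x2 -> H x0 x3 -> H x1 x3 -> H x2 x3 -> False.
Proof.
move=> U h01 h02 h12 h03 h13 h23.
have [b0 b1] := H_bound h01; have [_ b2] := H_bound h12; have [_ b3] := H_bound h23.
move: k4check_ok; rewrite /k4check => /(allI9 b0) /(allI9 b1).
cbv beta; rewrite h01 ?implyTb => /(allI9 b2); cbv beta; rewrite h02 h12 ?implyTb => /(allI9 b3).
cbv beta; rewrite h03 h13 h23 ?implyTb => /negP; apply; exact: U.
Qed.

(* book embedding local checks *)
Definition I7 := iota 1 7.
Definition bookA : bool :=
  all (fun i => all (fun j => all (fun i' => all (fun j' =>
    ~~ [&& H i j, H i' j', P i j == P i' j' & (i < i' < j) && (j < j')]) I7) I7) I7) I7.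
Lemma bookA_ok : bookA. Proof. by vm_compute. Qed.
Definition bookB : bool :=
  all (fun x => all (fun i => all (fun j =>
    ~~ [&& H 0 x, H i j, P i j & (i < x < j)]) I7) I7) I7.
Lemma bookB_ok : bookB. Proof. by vm_compute. Qed.
Definition bookC : bool :=
  all (fun y => all (fun i => all (fun j =>
    ~~ [&& H y 8, H i j, ~~ P i j & (i < y < j)]) I7) I7) I7.
Lemma bookC_ok : bookC. Proof. by vm_compute. Qed.

Lemma allI7 i (a : pred nat) : 0 < i < 8 -> all a I7 -> a i.
Proof. by move=> h /allP; apply; rewrite mem_iota. Qed.

Lemma book_A i j i' j' : 0 < i < 8 -> 0 < j < 8 -> 0 < i' < 8 -> 0 < j' < 8 ->
  H i j -> H i' j' -> P i j = P i' j' -> i < i' -> i' < j -> j < j' -> False.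
Proof.
move=> bi bj bi' bj' h1 h2 p l1 l2 l3.
move: bookA_ok; rewrite /bookA => /(allI7 bi) /(allI7 bj) /(allI7 bi') /(allI7 bj').
by rewrite h1 h2 p eqxx l1 l2 l3.
Qed.

Lemma book_B x i j : 0 < x < 8 -> 0 < i < 8 -> 0 < j < 8 ->
  H 0 x -> H i j -> P i j -> i < x -> x < j -> False.
Proof.
move=> bx bi bj h1 h2 p l1 l2.
move: bookB_ok; rewrite /bookB => /(allI7 bx) /(allI7 bi) /(allI7 bj).
by rewrite h1 h2 p l1 l2.
Qed.

Lemma book_C y i j : 0 < y < 8 -> 0 < i < 8 -> 0 < j < 8 ->
  H y 8 -> H i j -> P i j = false -> i < y -> y < j -> False.
Proof.
move=> bx bi bj h1 h2 p l1 l2.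
move: bookC_ok; rewrite /bookC => /(allI7 bx) /(allI7 bi) /(allI7 bj).
by rewrite h1 h2 p l1 l2.
Qed.

Definition cnt_lo (r : nat) : nat := H 0 r.+1 + \sum_(0 <= s < r) H s.+1 r.+1.
Lemma cnt_total : \sum_(0 <= r < 7) (cnt_lo r + H r.+1 8) = 15.
Proof. by rewrite /cnt_lo unlock; vm_compute. Qed.

Section G.
Variable n : nat.
Hypothesis n9 : 9 <= n.

Definition hub v := (v == 0) || (v == n.-1).
Definition loc v := if v == 0 then 0 else if v == n.-1 then 8 else (v.-1 %% 7).+1.
Definition gad v := v.-1 %/ 7.
Definition same u v := hub u || hub v || (gad u == gad v).
Definition E u v := same u v && H (loc u) (loc v).
Definition pg u v := if u == 0 then true else if v == n.-1 then false else P (loc u) (loc v).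

Lemma same_sym u v : same u v = same v u.
Proof. by rewrite /same; case: (hub u); case: (hub v) => //=; rewrite eq_sym. Qed.
Lemma same_refl u : same u u.
Proof. by rewrite /same eqxx !orbT. Qed.

Lemma E_sym u v : E u v = E v u.
Proof. by rewrite /E same_sym H_sym. Qed.
Lemma E_irr u : E u u = false.
Proof. by rewrite /E H_irr andbF. Qed.

Lemma Linj u v : u < n -> v < n -> same u v -> loc u = loc v -> u = v.
Proof.
rewrite /same /hub /loc /gad => hu hv.
case: (eqVneq u 0) => [?|?]; case: (eqVneq u n.-1) => [?|?];
case: (eqVneq v 0) => [?|?]; case: (eqVneq v n.-1) => [?|?] => //=; lia.
Qed.

Lemma hub_lt u : hub u -> u < n.
Proof. rewrite /hub => /orP[]/eqP->; lia. Qed.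

Lemma hub_loc u : hub u -> (loc u = 0) \/ (loc u = 8).
Proof.
have n10 : (n.-1 == 0) = false by lia.
rewrite /hub /loc => /orP[]/eqP->; rewrite ?eqxx ?n10; [by left | by right].
Qed.

Lemma hub_loc2 u v : hub u -> hub v -> u != v ->
  (loc u = 0 /\ loc v = 8) \/ (loc u = 8 /\ loc v = 0).
Proof.
move=> hu hv uv.
have ne : loc u <> loc v.
  by move=> /(Linj (hub_lt hu) (hub_lt hv)); rewrite /same hu => /(_ isT) /eqP; rewrite (negbTE uv).
case: (hub_loc hu) => a; case: (hub_loc hv) => b; rewrite a b in ne *;
  by [left | right | exfalso; apply: ne].
Qed.

Lemma hubE1 u v : hub u -> hub v -> u != v -> E u v -> False.
Proof.
move=> hu hv uv /andP[_]; case: (hub_loc2 hu hv uv) => [[-> ->]|[-> ->]] //.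
Qed.

Lemma hubE2 u v w : hub u -> hub w -> u != w -> E u v -> E v w -> False.
Proof.
move=> hu hw uw /andP[_ h1] /andP[_ h2].
case: (hub_loc2 hu hw uw) => [[a b]|[a b]]; rewrite a in h1; rewrite b in h2.
- exact: H_nocommon h1 h2.
- by apply: (@H_nocommon (loc v)); rewrite H_sym.
Qed.

Lemma five (h0 h1 h2 h3 h4 : bool) (g0 g1 g2 g3 g4 : nat) :
  ~~ (h0 && h1) -> ~~ (h0 && h2) -> ~~ (h0 && h3) -> ~~ (h0 && h4) ->
  ~~ (h1 && h2) -> ~~ (h1 && h3) -> ~~ (h1 && h4) ->
  ~~ (h2 && h3) -> ~~ (h2 && h4) -> ~~ (h3 && h4) ->
  h0 || h1 || (g0 == g1) -> h1 || h2 || (g1 == g2) -> h2 || h3 || (g2 == g3) ->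
  h3 || h4 || (g3 == g4) -> h4 || h0 || (g4 == g0) ->
  [/\ h0 || h2 || (g0 == g2), h0 || h3 || (g0 == g3), h1 || h3 || (g1 == g3),
      h1 || h4 || (g1 == g4) & h2 || h4 || (g2 == g4)].
Proof.
by case: h0; case: h1; case: h2; case: h3; case: h4 => //=;
  move=> *; split; lia.
Qed.

Lemma in5 (a x0 x1 x2 x3 x4 : nat) : a \in [:: x0; x1; x2; x3; x4] ->
  a = x0 \/ a = x1 \/ a = x2 \/ a = x3 \/ a = x4.
Proof. rewrite !inE => /orP[/eqP->|/orP[/eqP->|/orP[/eqP->|/orP[/eqP->|/eqP->]]]]; tauto. Qed.

Lemma noC5_nat x0 x1 x2 x3 x4 :
  x0 < n -> x1 < n -> x2 < n -> x3 < n -> x4 < n ->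
  uniq [:: x0; x1; x2; x3; x4] ->
  E x0 x1 -> E x1 x2 -> E x2 x3 -> E x3 x4 -> E x4 x0 -> False.
Proof.
move=> b0 b1 b2 b3 b4 U e01 e12 e23 e34 e40.
have U' := U.
move: U'; rewrite /= !inE !negb_or -!andbA.
case/and5P=> d01 d02 d03 d04 /and5P[d12 d13 d14 d23 /and3P[d24 d34 _]].
have X1 : forall a b, a != b -> E a b -> ~~ (hub a && hub b).
  by move=> a b d e; apply/andP => [[p q]]; exact: hubE1 p q d e.
have X2 : forall a b c, a != c -> E a b -> E b c -> ~~ (hub a && hub c).
  by move=> a b c d e f; apply/andP => [[p q]]; exact: hubE2 p q d e f.
have e04 : E x0 x4 by rewrite E_sym.
have e43 : E x4 x3 by rewrite E_sym.
have e10 : E x1 x0 by rewrite E_sym.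
have [s02 s03 s13 s14 s24] := five (g0 := gad x0) (g1 := gad x1) (g2 := gad x2)
  (g3 := gad x3) (g4 := gad x4)
  (X1 _ _ d01 e01) (X2 _ _ _ d02 e01 e12) (X2 _ _ _ d03 e04 e43) (X1 _ _ d04 e04)
  (X1 _ _ d12 e12) (X2 _ _ _ d13 e12 e23) (X2 _ _ _ d14 e10 e04)
  (X1 _ _ d23 e23) (X2 _ _ _ d24 e23 e34) (X1 _ _ d34 e34)
  (andP e01).1 (andP e12).1 (andP e23).1 (andP e34).1 (andP e40).1.
have S : forall a b, a \in [:: x0; x1; x2; x3; x4] -> b \in [:: x0; x1; x2; x3; x4] -> same a b.
  move=> a b; case/in5 => [->|[->|[->|[->|->]]]]; case/in5 => [->|[->|[->|[->|->]]]]; rewrite ?same_refl //;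
  try exact: (andP e01).1; try exact: (andP e12).1; try exact: (andP e23).1;
  try exact: (andP e34).1; try exact: (andP e40).1; rewrite same_sym //;
  try exact: (andP e01).1; try exact: (andP e12).1; try exact: (andP e23).1;
  try exact: (andP e34).1; try exact: (andP e40).1.
have Bd : forall a, a \in [:: x0; x1; x2; x3; x4] -> a < n.
  by move=> a; case/in5 => [->|[->|[->|[->|->]]]].
have UL : uniq [seq loc x | x <- [:: x0; x1; x2; x3; x4]].
  rewrite map_inj_in_uniq // => a b ha hb; apply: Linj; auto.
exact: (H_noC5 UL (andP e01).2 (andP e12).2 (andP e23).2 (andP e34).2 (andP e40).2).
Qed.

Lemma noK4_nat x0 x1 x2 x3 :
  x0 < n -> x1 < n -> x2 < n -> x3 < n ->
  uniq [:: x0; x1; x2; x3] ->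
  E x0 x1 -> E x0 x2 -> E x1 x2 -> E x0 x3 -> E x1 x3 -> E x2 x3 -> False.
Proof.
move=> b0 b1 b2 b3 U e01 e02 e12 e03 e13 e23.
have S : forall a b, a \in [:: x0; x1; x2; x3] -> b \in [:: x0; x1; x2; x3] -> same a b.
  move=> a b; rewrite !inE => /or4P[]/eqP-> /or4P[]/eqP->; rewrite ?same_refl //;
  try exact: (andP e01).1; try exact: (andP e12).1; try exact: (andP e23).1;
  try exact: (andP e02).1; try exact: (andP e03).1; try exact: (andP e13).1;
  rewrite same_sym //;
  try exact: (andP e01).1; try exact: (andP e12).1; try exact: (andP e23).1;
  try exact: (andP e02).1; try exact: (andP e03).1; try exact: (andP e13).1.
have Bd : forall a, a \in [:: x0; x1; x2; x3] -> a < n.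
  by move=> a; rewrite !inE => /or4P[]/eqP->.
have UL : uniq [seq loc x | x <- [:: x0; x1; x2; x3]].
  rewrite map_inj_in_uniq // => a b ha hb; apply: Linj; auto.
exact: (H_noK4 UL (andP e01).2 (andP e02).2 (andP e12).2 (andP e03).2 (andP e13).2 (andP e23).2).
Qed.

Lemma sum0 m k (F : nat -> nat) : (forall i, m <= i < k -> F i = 0) -> \sum_(m <= i < k) F i = 0.
Proof. by move=> h; rewrite (eq_big_nat _ _ h) big1. Qed.

Lemma shift m k (F : nat -> nat) : \sum_(m <= i < m + k) F i = \sum_(0 <= i < k) F (i + m).
Proof. by rewrite -{1}(add0n m) big_addn addKn. Qed.

Lemma periodic (F : nat -> nat) k :
  \sum_(1 <= v < 1 + 7 * k) F (v.-1 %% 7) = k * \sum_(0 <= r < 7) F r.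
Proof.
elim: k => [|k IH]; first by rewrite muln0 big_geq.
rewrite (big_cat_nat (n := 1 + 7 * k)) //=; last by lia.
rewrite IH mulSn addnC; congr (_ + _).
have -> : 1 + 7 * k.+1 = (1 + 7 * k) + 7 by lia.
rewrite shift; apply: eq_big_nat => i hi; congr F; lia.
Qed.

Lemma loc_nh u : 0 < u < n.-1 -> loc u = (u.-1 %% 7).+1 /\ hub u = false.
Proof.
move=> h; rewrite /loc /hub.
have -> : (u == 0) = false by lia.
by have -> : (u == n.-1) = false by lia.
Qed.

Lemma S_mid v : 0 < v < n.-1 ->
  \sum_(0 <= u < n) ((u < v) && E u v) = cnt_lo (v.-1 %% 7).
Proof.
move=> hv; have [lv hbv] := loc_nh hv.
rewrite (big_cat_nat (n := v)) //=; last by lia.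
rewrite [X in _ + X]sum0 ?addn0; last by move=> i hi; have -> : (i < v) = false by lia.
rewrite (eq_big_nat _ _ (F2 := fun u => nat_of_bool (E u v))); last first.
  by move=> i hi; have -> : (i < v) = true by lia.
rewrite (big_cat_nat (n := 1)) //=; last by lia.
rewrite big_nat1.
set j := gad v; set r := v.-1 %% 7.
have vj : v = (1 + 7 * j) + r by rewrite /j /r /gad; lia.
rewrite (big_cat_nat (n := 1 + 7 * j)) //=; try lia.
rewrite [X in _ + (X + _)]sum0; last first.
  move=> i hi; have [li hbi] := loc_nh (u := i) ltac:(lia).
  by rewrite /E /same hbi hbv /=; have -> : (gad i == j) = false by rewrite /gad /j /gad; lia.
rewrite add0n.
have -> : \sum_(1 + 7 * j <= i < v) E i v = \sum_(1 + 7 * j <= i < (1 + 7 * j) + r) E i v.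
  by rewrite -vj.
rewrite shift /cnt_lo; congr (_ + _).
  by rewrite /E /same /hub eqxx /= lv /loc eqxx.
apply: eq_big_nat => i hi.
have [li hbi] := loc_nh (u := i + (1 + 7 * j)) ltac:(lia).
rewrite /E /same hbi hbv li lv /=.
have -> : (gad (i + (1 + 7 * j)) == j) = true by rewrite /gad; lia.
by congr (nat_of_bool (H _ _)); lia.
Qed.


Lemma S_last : n %% 7 = 2 ->
  \sum_(0 <= u < n) ((u < n.-1) && E u n.-1) = (n %/ 7) * \sum_(0 <= r < 7) H r.+1 8.
Proof.
move=> n7.
have hbn : hub n.-1 by rewrite /hub eqxx orbT.
have ln : loc n.-1 = 8 by rewrite /loc eqxx; have -> : (n.-1 == 0) = false by lia.
rewrite (big_cat_nat (n := 1)) //=; last by lia.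
have e0 : E 0 n.-1 = false.
  by apply/negP; apply: hubE1; rewrite /hub ?eqxx ?orbT //; lia.
rewrite big_nat1 e0 andbF add0n.
rewrite (big_cat_nat (n := n.-1)) //=; try lia.
rewrite [X in _ + X]sum0 ?addn0; last by move=> i hi; have -> : (i < n.-1) = false by lia.
have e1 : n.-1 = 1 + 7 * (n %/ 7) by lia.
rewrite -periodic -e1; apply: eq_big_nat => i hi.
have -> : (i < n.-1) = true by lia.
have [li hbi] := loc_nh (u := i) ltac:(lia).
by rewrite /= /E /same hbn orbT /= ln li.
Qed.

Lemma S_total : n %% 7 = 2 ->
  \sum_(0 <= v < n) \sum_(0 <= u < n) ((u < v) && E u v) = 15 * (n %/ 7).
Proof.
move=> n7.
rewrite (big_cat_nat (n := 1)) //=; last by lia.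
rewrite big_nat1 sum0 ?add0n; last by [].
rewrite (big_cat_nat (n := n.-1)) //=; try lia.
have L : forall F : nat -> nat, \sum_(n.-1 <= v < n) F v = F n.-1.
  have En : n = n.-1.+1 by lia.
  by move=> F; rewrite {2}En big_nat1.
rewrite L S_last //.
rewrite (eq_big_nat _ _ (F2 := fun v => cnt_lo (v.-1 %% 7))); last by move=> i hi; apply: S_mid.
have e1 : n.-1 = 1 + 7 * (n %/ 7) by lia.
rewrite e1 periodic -mulnDr -big_split /= cnt_total; lia.
Qed.

Lemma E_nh u v : 0 < u < n.-1 -> 0 < v < n.-1 -> E u v ->
  gad u = gad v /\ H ((u.-1 %% 7).+1) ((v.-1 %% 7).+1).
Proof.
move=> hu hv /andP[s h]; have [lu hu'] := loc_nh hu; have [lv hv'] := loc_nh hv.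
by move: s h; rewrite /same hu' hv' lu lv /= => /eqP.
Qed.

Lemma nocross u v u' v' : v' < n -> u < v -> u' < v' -> E u v -> E u' v' ->
  pg u v = pg u' v' -> u < u' -> u' < v -> v < v' -> False.
Proof.
move=> bv' l1 l2 e1 e2 p l3 l4 l5.
have n1 : (u' == 0) = false by lia.
case: (eqVneq u 0) => [u0|u0].
  subst u; move: p; rewrite /pg eqxx n1.
  case: (eqVneq v' n.-1) => // v'1 p.
  have [g h] := E_nh (u := u') (v := v') ltac:(lia) ltac:(lia) e2.
  have [lv _] := loc_nh (u := v) ltac:(lia).
  have [lu' _] := loc_nh (u := u') ltac:(lia).
  have [lv' _] := loc_nh (u := v') ltac:(lia).
  move: e1 p; rewrite /E /same /hub eqxx /= /loc eqxx -/(loc v) lv => e1.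
  rewrite -/(loc u') -/(loc v') lu' lv' => p.
  apply: (@book_B _ _ _ _ _ _ e1 h (esym p)); move: g; rewrite /gad; lia.
case: (eqVneq v' n.-1) => [v'1|v'1].
  subst v'; move: p; rewrite /pg (negbTE u0) n1 eqxx.
  have -> : (v == n.-1) = false by lia.
  have [g h] := E_nh (u := u) (v := v) ltac:(lia) ltac:(lia) e1.
  have [lu _] := loc_nh (u := u) ltac:(lia).
  have [lv _] := loc_nh (u := v) ltac:(lia).
  have [lu' hu'] := loc_nh (u := u') ltac:(lia).
  move: e2; rewrite /E /same /hub eqxx !orbT /= /loc eqxx.
  have -> : (n.-1 == 0) = false by lia.
  rewrite -/(loc u') lu' => e2.
  rewrite -/(loc u) -/(loc v) lu lv => p.
  apply: (@book_C _ _ _ _ _ _ e2 h p); move: g; rewrite /gad; lia.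
move: p; rewrite /pg (negbTE u0) n1 (negbTE v'1).
have -> : (v == n.-1) = false by lia.
have [g h] := E_nh (u := u) (v := v) ltac:(lia) ltac:(lia) e1.
have [g' h'] := E_nh (u := u') (v := v') ltac:(lia) ltac:(lia) e2.
have [lu _] := loc_nh (u := u) ltac:(lia).
have [lv _] := loc_nh (u := v) ltac:(lia).
have [lu' _] := loc_nh (u := u') ltac:(lia).
have [lv' _] := loc_nh (u := v') ltac:(lia).
rewrite lu lv lu' lv' => p.
apply: (@book_A _ _ _ _ _ _ _ _ h h' p); move: g g'; rewrite /gad; lia.
Qed.

End G.

Lemma ned n (E : nat -> nat -> bool) :
  nedges (fun u v : 'I_n => E u v) = \sum_(0 <= v < n) \sum_(0 <= u < n) ((u < v) && E u v).
Proof.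
rewrite big_mkord; under eq_bigr => v _ do rewrite big_mkord.
rewrite exchange_big pair_bigA /= /nedges -sum1_card big_mkcond /=.
by apply: eq_bigr => p _; rewrite inE; case: (_ && _).
Qed.


Section RealPart.
Import Order.TTheory GRing.Theory Num.Theory.
Import numFieldNormedType.Exports.
Local Open Scope ring_scope.

Definition arcf (R : realType) (a b sg : R) (t : R) : R * R :=
  (a + t * (b - a), sg * (t * (1 - t) * (b - a) ^+ 2)).

Lemma arcf_cont (R : realType) (a b sg : R) : continuous (arcf a b sg).
Proof.
move=> x.
apply: (@cvg_pair _ _ _ _ (nbhs (a + x * (b - a))) (nbhs (sg * (x * (1 - x) * (b - a) ^+ 2)))).
- apply: cvgD; first exact: cvg_cst.
  apply: cvgM; [exact: cvg_id | exact: cvg_cst].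
- apply: cvgM; first exact: cvg_cst.
  apply: cvgM; last exact: cvg_cst.
  apply: cvgM; first exact: cvg_id.
  apply: cvgB; [exact: cvg_cst | exact: cvg_id].
Qed.

Lemma real_overlap (R : realFieldType) (a b a' b' t s : R) :
  a < b -> a' < b' -> 0 < t < 1 -> 0 < s < 1 ->
  a + t * (b - a) = a' + s * (b' - a') -> a < b' /\ a' < b.
Proof. move=> h1 h2 /andP[t0 t1] /andP[s0 s1] e; split; nra. Qed.

Lemma real_key (R : realFieldType) (a b a' b' t s : R) :
  a < b -> a' < b' -> 0 < t < 1 -> 0 < s < 1 ->
  a + t * (b - a) = a' + s * (b' - a') ->
  t * (1 - t) * (b - a) ^+ 2 = s * (1 - s) * (b' - a') ^+ 2 ->
  (a <= a' /\ b' <= b /\ (a < a' \/ b' < b)) -> False.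
Proof.
move=> h1 h2 /andP[t0 t1] /andP[s0 s1] e1 e2 [l1 [l2 l3]].
set x := a + t * (b - a) in e1.
have p1 : t * (1 - t) * (b - a) ^+ 2 = (x - a) * (b - x) by rewrite /x; ring.
have p2 : s * (1 - s) * (b' - a') ^+ 2 = (x - a') * (b' - x) by rewrite e1; ring.
have xa : a' < x by rewrite e1; nra.
have xb : x < b' by rewrite e1; nra.
rewrite p1 p2 in e2.
case: l3 => l3; nra.
Qed.

Lemma sign_key (R : realFieldType) (c c' : bool) (p p' : R) : 0 < p -> 0 < p' ->
  (if c then 1 else -1) * p = (if c' then 1 else -1) * p' -> c = c' /\ p = p'.
Proof. by case: c; case: c' => /= h h' e; split => //; lra. Qed.

Lemma planar_of_book (R : realType) n (e : rel 'I_n) (pg : nat -> nat -> bool) :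
  (forall u v u' v' : 'I_n, (u < v)%N -> e u v -> (u' < v')%N -> e u' v' ->
     pg u v = pg u' v' -> (u < u')%N -> (u' < v)%N -> (v < v')%N -> False) ->
  planar R e.
Proof.
move=> NC.
pose pos := fun v : 'I_n => ((v : nat)%:R, 0) : R * R.
pose sg := fun u v : 'I_n => (if pg u v then 1 else -1) : R.
exists pos, (fun u v : 'I_n => arcf (u : nat)%:R (v : nat)%:R (sg u v)).
split; [|split].
- by move=> u v [] /eqP; rewrite eqr_nat => /eqP /val_inj.
- move=> u v uv euv.
  have d0 : (u : nat)%:R < (v : nat)%:R :> R by rewrite ltr_nat.
  split.
  + exact (continuous_subspaceT (A := [set t | unit_interval t]) (@arcf_cont _ _ _ _)).
  + move=> t s _ _; rewrite /arcf => -[] /addrI eq1 _.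
    by apply: (mulIf _ eq1); rewrite subr_eq0 gt_eqF.
  + by rewrite /arcf /pos; congr pair; ring.
  + by rewrite /arcf /pos; congr pair; ring.
  + move=> t w /andP[t0 t1]; rewrite /arcf /pos => -[] _ /eqP; rewrite /sg.
    have p0 : 0 < t * (1 - t) * ((v : nat)%:R - (u : nat)%:R) ^+ 2 :> R.
      by apply: mulr_gt0; [apply: mulr_gt0; lra | apply: exprn_gt0; lra].
    by case: (pg u v); apply/negP; rewrite ?mul1r ?mulN1r ?oppr_eq0 gt_eqF.
- move=> u v u' v' uv euv uv' euv' neq t s ht hs; rewrite /arcf => -[] ex ey.
  set a := (u : nat)%:R : R; set b := (v : nat)%:R : R.
  set a' := (u' : nat)%:R : R; set b' := (v' : nat)%:R : R.
  have ab : a < b by rewrite ltr_nat.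
  have ab' : a' < b' by rewrite ltr_nat.
  have [t0 t1] : 0 < t /\ t < 1 by move: ht => /andP.
  have [s0 s1] : 0 < s /\ s < 1 by move: hs => /andP.
  have p0 : 0 < t * (1 - t) * (b - a) ^+ 2.
    by apply: mulr_gt0; [apply: mulr_gt0; lra | apply: exprn_gt0; lra].
  have p0' : 0 < s * (1 - s) * (b' - a') ^+ 2.
    by apply: mulr_gt0; [apply: mulr_gt0; lra | apply: exprn_gt0; lra].
  have [pgE pE] := sign_key p0 p0' ey.
  have [o1 o2] := real_overlap ab ab' ht hs ex.
  move: o1 o2; rewrite !ltr_nat => o1 o2.
  have nc1 : ~ ((u < u')%N /\ (u' < v)%N /\ (v < v')%N).
    by case=> ? [? ?]; apply: (NC u v u' v').
  have nc2 : ~ ((u' < u)%N /\ (u < v')%N /\ (v' < v)%N).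
    by case=> ? [? ?]; apply: (NC u' v' u v) => //; rewrite pgE.
  have nq : ~ ((u : nat) = u' /\ (v : nat) = v').
    by case=> /val_inj e1 /val_inj e2; apply: neq; rewrite e1 e2.
  have [[l1 [l2 l3]]|[l1 [l2 l3]]] :
     ((u <= u')%N /\ (v' <= v)%N /\ ((u < u')%N \/ (v' < v)%N)) \/
     ((u' <= u)%N /\ (v <= v')%N /\ ((u' < u)%N \/ (v < v')%N)).
    by have := ltn_ord u; lia.
  + apply: (real_key ab ab' ht hs ex pE); rewrite /a /a' /b /b' !ler_nat !ltr_nat.
    by split => //; split.
  + apply: (real_key ab' ab hs ht (esym ex) (esym pE)); rewrite /a /a' /b /b' !ler_nat !ltr_nat.
    by split => //; split.
Qed.

End RealPart.

Theorem theorem2 (R : realType) (n : nat) :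
  (9 <= n)%N -> n %% 7 = 2 ->
  exists e : rel 'I_n,
    [/\ simple_graph e, planar R e, ~ has_K4 e, ~ has_C5 e &
        7 * nedges e = 15 * (n - 2)].
Proof.
move=> n9 n7.
exists (fun u v : 'I_n => E n u v).
split.
- split=> [u|u v]; [by rewrite E_irr | exact: E_sym].
- apply: (@planar_of_book R n _ (pg n)) => u v u' v' uv euv uv' euv' p l1 l2 l3.
  exact: (nocross n9 (ltn_ord v') uv uv' euv euv' p l1 l2 l3).
- case=> f [fi fe].
  have d : forall i j : 'I_4, i != j -> (f i : nat) != f j.
    by move=> i j ij; apply: contra ij => /eqP/val_inj/fi ->.
  pose o0 := @Ordinal 4 0 isT; pose o1 := @Ordinal 4 1 isT;
  pose o2 := @Ordinal 4 2 isT; pose o3 := @Ordinal 4 3 isT.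
  apply: (@noK4_nat n n9 (f o0) (f o1) (f o2) (f o3)) => //;
    try (by apply: fe); rewrite /= !inE !negb_or !d //.
- case=> f [fi fe].
  have d : forall i j : 'I_5, i != j -> (f i : nat) != f j.
    by move=> i j ij; apply: contra ij => /eqP/val_inj/fi ->.
  pose o0 := @Ordinal 5 0 isT; pose o1 := @Ordinal 5 1 isT;
  pose o2 := @Ordinal 5 2 isT; pose o3 := @Ordinal 5 3 isT; pose o4 := @Ordinal 5 4 isT.
  have fe' : forall i j : 'I_5, (i.+1 %% 5)%N = j -> E n (f i) (f j).
    move=> i j ij; have -> : j = ordS i by apply: val_inj; rewrite /= -ij.
    exact: fe.
  apply: (@noC5_nat n n9 (f o0) (f o1) (f o2) (f o3) (f o4)) => //;
    try (by apply: fe'); rewrite /= !inE !negb_or !d //.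
- rewrite ned S_total //; lia.
Qed.
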